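(* Let $n\ge 2$. For a partition $\lambda$ of $n$, let $u_\lambda$ be the number of unrooted binary trees with leaf set $[n]$ fixed by the relabeling action of a permutation $\sigma\in\mathfrak{S}_n$ of cycle type $\lambda$ (equivalently, $u_\lambda$ is the coefficient of $p_\lambda/z_\lambda$ in $Z_U=h_3[Z_R]+p_1Z_R+Z_R-Z_R^2-p_1$), let $\lambda^2$ be the cycle type of $\sigma^2$, and let $z_\lambda=\prod_{i\ge1}i^{m_i}m_i!$ where $m_i$ is the number of parts of $\lambda$ equal to $i$. Then the number of unlabeled unrooted tanglegrams with $n$ leaves is $\sum_{\lambda\vdash n} u_\lambda^2/z_\lambda$, and the number of unlabeled unrooted unordered tanglegrams with $n$ leaves is \[ \frac12\sum_{\lambda\vdash n}\frac{u_\lambda^2}{z_\lambda}+\frac12\sum_{\lambda\vdash n}\frac{u_{\lambda^2}}{z_\lambda}. \]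
   Context: An unrooted binary tree with leaf set $A$ is a tree in which every vertex has degree one or three, whose leaves (degree-one vertices) are labeled bijectively by $A$ and whose degree-three vertices are unlabeled; the one-vertex tree is excluded; trees are considered up to label-preserving isomorphism. A (rooted) binary tree with leaf set $A$ is a rooted tree in which every vertex has zero or two unordered children, with leaves labeled bijectively by $A$ and internal vertices unlabeled (the single labeled vertex counts). $\mathfrak{S}_n$ acts on trees with leaf set $[n]$ by relabeling leaves. An unrooted tanglegram with leaf set $[n]$ is an ordered pair of unrooted binary trees with leaf set $[n]$; an unrooted unordered tanglegram is an unordered pair (multiset of size two) of such trees. $\mathfrak{S}_n$ acts on both by relabeling the two trees simultaneously, and the unlabeled objects with $n$ leaves are the orbits. Cycle index of a species $F$: $Z_F=\sum_{n\ge0}\frac1{n!}\sum_{\sigma\in\mathfrak{S}_n}\mathrm{fix}\,F[\sigma]\,p_\sigma$ with $p_\sigma=\prod_i p_i^{\sigma_i}$, $\sigma_i$ the number of $i$-cycles; $Z_R$, $Z_U$ are the cycle indices of rooted and unrooted binary trees; $h_3=\tfrac16(p_1^3+3p_1p_2+2p_3)$; plethysm $f[g]$ replaces each $p_i$ in $f$ by $g(p_i,p_{2i},\dots)$. *)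

(* Defs.v *)
From mathcomp Require Import all_boot all_order all_fingroup all_algebra.
Set Implicit Arguments. Unset Strict Implicit. Unset Printing Implicit Defensive.

(* Vertices of an unrooted binary tree with leaf set [n]: the n labeled leaves
   (inl i) and n-2 unlabeled internal vertices (inr j).  A tree whose vertices
   have degree 1 or 3 with n leaves has exactly n-2 degree-3 vertices. *)
Definition V (n : nat) := ('I_n + 'I_n.-2)%type.

Definition graph (n : nat) := {set (V n * V n)}.

Definition deg n (G : graph n) (x : V n) : nat := #|[set y | (x, y) \in G]|.

Definition is_ubtree n (G : graph n) : bool :=
  [&& [forall x, (x, x) \notin G],
      [forall x, forall y, ((x, y) \in G) == ((y, x) \in G)],
      [forall x, forall y, connect (fun a b => (a, b) \in G) x y],
      #|G| == 2 * (#|{: V n}|).-1,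
      [forall i, deg G (inl i) == 1] &
      [forall j, deg G (inr j) == 3]].

Definition vmap n (s : {perm 'I_n}) (p : {perm 'I_n.-2}) (v : V n) : V n :=
  match v with inl i => inl (s i) | inr j => inr (p j) end.

Definition gmap n (f : V n -> V n) (G : graph n) : graph n :=
  [set (f e.1, f e.2) | e in G].

Definition UBT n : {set graph n} := [set G : graph n | is_ubtree G].

Definition isoclass n (G : graph n) : {set graph n} :=
  [set H in UBT n | [exists p : {perm 'I_n.-2}, gmap (vmap 1 p) G == H]].

(* unrooted binary trees with leaf set [n], up to label-preserving isomorphism *)
Definition Trees n : {set {set graph n}} := [set isoclass G | G in UBT n].

Definition actT n (s : {perm 'I_n}) (C : {set graph n}) : {set graph n} :=
  [set gmap (vmap s 1) G | G in C].

Definition Tangle n := setX (Trees n) (Trees n).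
Definition orbT n (x : {set graph n} * {set graph n}) :=
  [set (actT s x.1, actT s x.2) | s : {perm 'I_n}].
Definition num_tanglegrams n : nat := #|[set orbT x | x in Tangle n]|.

(* unordered tanglegrams: a multiset {C1, C2} of size two is encoded by the
   set [set C1; C2] (this encoding is injective on size-two multisets). *)
Definition UTangle n : {set {set {set graph n}}} :=
  [set [set x.1; x.2] | x in Tangle n].
Definition orbU n (P : {set {set graph n}}) :=
  [set [set actT s C | C in P] | s : {perm 'I_n}].
Definition num_utanglegrams n : nat := #|[set orbU P | P in UTangle n]|.

Definition fixU n (s : {perm 'I_n}) : nat :=
  #|[set C in Trees n | actT s C == C]|.

(* Partitions of n in multiplicity notation: l i = number of parts equal to i+1. *)
Definition partn_t n := {ffun 'I_n -> 'I_n.+1}.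
Definition is_partn n (l : partn_t n) : bool := \sum_(i < n) i.+1 * l i == n.

Definition ctype n (s : {perm 'I_n}) : partn_t n :=
  [ffun i : 'I_n => inord #|[set c in porbits s | #|c| == i.+1]|].

Definition zee n (l : partn_t n) : nat := \prod_(i < n) (i.+1 ^ l i * (l i)`!).

Definition ulam n (l : partn_t n) : nat :=
  if [pick s : {perm 'I_n} | ctype s == l] is Some s then fixU s else 0.

Definition lsq n (l : partn_t n) : partn_t n :=
  if [pick s : {perm 'I_n} | ctype s == l] is Some s then ctype (s ^+ 2) else l.

(* Main.v *)
Require Import Defs.
From mathcomp Require Import all_boot all_order all_fingroup all_algebra.
From mathcomp Require Import zify ring.
From Stdlib Require Import Lia.
Set Implicit Arguments. Unset Strict Implicit. Unset Printing Implicit Defensive.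

Section Cyc.
Variable T : finType.
Implicit Types (u t : {perm T}) (x y z : T).

Definition clen u x := #|porbit u x|.
Definition off u z y := index y (traject u z (clen u z)).

Lemma clen_gt0 u x : 0 < clen u x.
Proof. by rewrite lt0n card_porbit_neq0. Qed.

Lemma iter_porbitE u i x : iter i u x \in porbit u x.
Proof. by rewrite -permX mem_porbit. Qed.

Lemma porbit_iter u i x : porbit u (iter i u x) = porbit u x.
Proof. by rewrite -permX porbit_perm. Qed.

Lemma porbit_s u x : porbit u (u x) = porbit u x.
Proof. exact: (porbit_iter u 1 x). Qed.

Lemma porbit_eq u x y : y \in porbit u x -> porbit u y = porbit u x.
Proof. by move=> h; apply/eqP; rewrite eq_porbit_mem. Qed.

Lemma iter_mod u x m : iter (m %% clen u x) u x = iter m u x.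
Proof.
have h q : iter (q * clen u x) u x = x.
  by elim: q => //= q IH; rewrite mulSn iterD IH iter_porbit.
by rewrite {2}(divn_eq m (clen u x)) addnC iterD h.
Qed.

Lemma iter_inj_lt u x i j : i < clen u x -> j < clen u x ->
  iter i u x = iter j u x -> i = j.
Proof.
move=> hi hj e; have U := uniq_traject_porbit u x.
apply/eqP; rewrite -(nth_uniq x _ _ U) ?size_traject //.
by rewrite !(nth_traject u _ x) // e.
Qed.

Lemma off_iter u x i : i < clen u x -> off u x (iter i u x) = i.
Proof.
move=> hi; rewrite /off -(nth_traject u hi x) index_uniq ?size_traject //.
exact: uniq_traject_porbit.
Qed.

Lemma off_lt u x y : y \in porbit u x -> off u x y < clen u x.
Proof.
by rewrite porbit_traject => h; rewrite /off -[X in _ < X](size_traject u x) index_mem.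
Qed.

Lemma iter_off u x y : y \in porbit u x -> iter (off u x y) u x = y.
Proof.
move=> h; have hl := off_lt h; rewrite -(nth_traject u hl x).
by rewrite /off nth_index // -porbit_traject.
Qed.

Lemma off_succ u x y : y \in porbit u x -> off u x (u y) = (off u x y).+1 %% clen u x.
Proof.
move=> h; rewrite -{1}(iter_off h) -[u (iter _ _ _)]/(iter (off u x y).+1 u x).
by rewrite -iter_mod off_iter // ltn_pmod // clen_gt0.
Qed.

Lemma clen_eq u x y : y \in porbit u x -> clen u y = clen u x.
Proof. by move=> h; rewrite /clen (porbit_eq h). Qed.

Lemma iter_conj u t i x : iter i (u ^ t)%g (t x) = t (iter i u x).
Proof. by elim: i => //= i ->; rewrite permJ. Qed.

Lemma porbit_conj u t x : porbit (u ^ t)%g (t x) = [set t y | y in porbit u x].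
Proof.
apply/setP => z; apply/porbitP/imsetP.
  by case=> i ->; exists ((u ^+ i)%g x); rewrite ?mem_porbit // !permX iter_conj.
by case=> y /porbitP [i ->] ->; exists i; rewrite !permX iter_conj.
Qed.

Lemma clen_conj u t x : clen (u ^ t)%g (t x) = clen u x.
Proof. by rewrite /clen porbit_conj card_imset //; apply: perm_inj. Qed.

Lemma porbit_disj u x y z : z \in porbit u x -> z \in porbit u y -> porbit u x = porbit u y.
Proof. by move=> h1 h2; rewrite -(porbit_eq h1) (porbit_eq h2). Qed.

End Cyc.

Section Cyc2.
Variable T : finType.
Implicit Types (u v t : {perm T}) (x y z : T).

Definition cyc u k : {set {set T}} := [set c in porbits u | #|c| == k].

Lemma porbitsP u c : reflect (exists x, c = porbit u x) (c \in porbits u).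
Proof.
apply: (iffP imsetP); first by case=> x _ ->; exists x.
by case=> x ->; exists x.
Qed.

Lemma porbits_conj u t : porbits (u ^ t)%g = [set [set t y | y in c] | c : {set T} in porbits u].
Proof.
apply/setP => c; apply/porbitsP/imsetP.
  case=> x ->; exists (porbit u (t^-1%g x)); first by apply/porbitsP; eexists.
  by rewrite -porbit_conj permKV.
by case=> c0 /porbitsP [x ->] ->; exists (t x); rewrite porbit_conj.
Qed.

Lemma cyc_conj u t k : #|cyc (u ^ t)%g k| = #|cyc u k|.
Proof.
have -> : cyc (u ^ t)%g k = [set [set t y | y in c] | c : {set T} in cyc u k].
  apply/setP => c; rewrite inE porbits_conj; apply/andP/imsetP.
    case=> /imsetP [c0 h0 ->]; rewrite card_imset; last exact: perm_inj.
    by move=> hk; exists c0 => //; rewrite inE h0.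
  case=> c0; rewrite inE => /andP [h0 hk] ->; split; first by apply/imsetP; exists c0.
  by rewrite card_imset //; apply: perm_inj.
by rewrite card_imset //; apply: imset_inj; apply: perm_inj.
Qed.

Lemma pick_porbit u c d : c \in porbits u ->
  odflt d [pick y in c] \in c /\ porbit u (odflt d [pick y in c]) = c.
Proof.
case/porbitsP => x ->; case: pickP => [y hy|h] /=.
  by split => //; rewrite (porbit_eq hy).
by move: (h x); rewrite porbit_id.
Qed.

Lemma pick_def (c : {set T}) d d' x : x \in c -> odflt d [pick y in c] = odflt d' [pick y in c].
Proof. by move=> hx; case: pickP => [//|h]; move: (h x); rewrite hx. Qed.

Variables u v : {perm T}.
Hypothesis Hc : forall k, #|cyc u k| = #|cyc v k|.

Definition tc x : T :=
  let c := porbit u x in let k := #|c| in let r := odflt x [pick y in c] in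
  let c' := nth set0 (enum (cyc v k)) (index c (enum (cyc u k))) in
  let r' := odflt x [pick y in c'] in
  iter (off u r x) v r'.

Lemma tc_facts x :
  let c := porbit u x in let k := #|c| in let r := odflt x [pick y in c] in
  let j := index c (enum (cyc u k)) in
  let c' := nth set0 (enum (cyc v k)) j in
  let r' := odflt x [pick y in c'] in
  [/\ porbit u r = c, x \in porbit u r, clen u r = k, j < size (enum (cyc v k))
      & [/\ c' \in cyc v k, porbit v r' = c' & clen v r' = k]].
Proof.
move=> c k r j c' r'.
have cP : c \in cyc u k by rewrite inE eqxx andbT; apply/porbitsP; exists x.
have [rc rP] : r \in c /\ porbit u r = c by apply: pick_porbit; apply/porbitsP; exists x.
have hj : j < size (enum (cyc v k)) by rewrite -cardE -Hc cardE index_mem mem_enum.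
have c'P : c' \in cyc v k by rewrite -mem_enum; apply: mem_nth.
move: (c'P); rewrite inE => /andP [c'o /eqP c'k].
have [r'c r'P] := pick_porbit x c'o.
split => //.
- by rewrite rP porbit_id.
- by rewrite /clen rP.
- split; [by rewrite c'o c'k eqxx | exact: r'P | by rewrite /clen; rewrite [porbit v r']r'P].
Qed.

Lemma tc_comm x : tc (u x) = v (tc x).
Proof.
rewrite /tc porbit_s.
have [rP xr rk _ [_ r'P r'k]] := tc_facts x.
set c := porbit u x in rP xr rk r'P r'k *.
set k := #|c| in rk r'P r'k *.
rewrite (pick_def (u x) x (porbit_id u x)).
set c' := nth set0 _ _ in r'P r'k *.
have c'n : x \in c' \/ ~ x \in c' by case: (x \in c'); [left | right].
have r'E : odflt (u x) [pick y in c'] = odflt x [pick y in c'].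
  by apply: (pick_def _ _ (x := odflt x [pick y in c'])); rewrite -{2}r'P porbit_id.
rewrite r'E; set r := odflt x _ in rP xr rk *; set r' := odflt x _ in r'P r'k *.
rewrite off_succ // rk -r'k iter_mod //.
Qed.

Lemma tc_inj : injective tc.
Proof.
move=> x y.
have [rPx xrx rkx hjx [c'x r'Px r'kx]] := tc_facts x.
have [rPy xry rky hjy [c'y r'Py r'ky]] := tc_facts y.
rewrite /tc.
set cx := porbit u x in rPx xrx rkx hjx c'x r'Px r'kx *.
set cy := porbit u y in rPy xry rky hjy c'y r'Py r'ky *.
set kx := #|cx| in rkx hjx c'x r'Px r'kx *.
set ky := #|cy| in rky hjy c'y r'Py r'ky *.
set jx := index cx _ in hjx c'x r'Px r'kx *.
set jy := index cy _ in hjy c'y r'Py r'ky *.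
set c'x' := nth set0 _ jx in c'x r'Px r'kx *.
set c'y' := nth set0 _ jy in c'y r'Py r'ky *.
set rx := odflt x [pick z in cx] in rPx xrx rkx *.
set ry := odflt y [pick z in cy] in rPy xry rky *.
set r'x := odflt x [pick z in c'x'] in r'Px r'kx *.
set r'y := odflt y [pick z in c'y'] in r'Py r'ky *.
move=> e.
have ec' : c'x' = c'y'.
  by rewrite -r'Px -r'Py -(porbit_iter _ (off u rx x)) e porbit_iter.
have ek : kx = ky.
  by move: c'x c'y; rewrite !inE ec' => /andP [_ /eqP <-] /andP [_ /eqP <-].
have ej : jx = jy.
  apply/eqP; rewrite -(nth_uniq set0 hjx _ (enum_uniq _)); last by rewrite ek.
  by rewrite -/c'x' ec' /c'y' ek.
have ec : cx = cy.
  have hx : cx \in enum (cyc u kx).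
    by rewrite mem_enum inE eqxx andbT; apply/porbitsP; exists x.
  have hy : cy \in enum (cyc u ky).
    by rewrite mem_enum inE eqxx andbT; apply/porbitsP; exists y.
  by rewrite -(nth_index set0 hx) -(nth_index set0 hy) -/jx -/jy ej ek.
have er : rx = ry.
  by rewrite /rx /ry ec; apply: pick_def (porbit_id u y).
have er' : r'x = r'y.
  have r'in : r'x \in c'x' by move: (porbit_id v r'x); rewrite r'Px.
  by rewrite /r'x /r'y -ec'; apply: (pick_def _ _ r'in).
rewrite er' in e.
have ei : off u rx x = off u ry y.
  apply: (iter_inj_lt (u := v) (x := r'y)) => //.
  - by rewrite -er' r'kx -rkx off_lt.
  - by rewrite r'ky -rky off_lt.
by rewrite -(iter_off xrx) -(iter_off xry) ei er.
Qed.

Lemma conj_of_cyc : exists t, v = (u ^ t)%g.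
Proof.
exists (perm tc_inj); apply/permP => x; set t := perm tc_inj.
have h : (u ^ t)%g (t (t^-1%g x)) = t (u (t^-1%g x)) := permJ _ _ _.
rewrite permKV in h; rewrite h permE tc_comm -[tc (t^-1%g x)](permE tc_inj) permKV //.
Qed.

End Cyc2.

Section Cent.
Variable T : finType.
Variable s : {perm T}.
Implicit Types (t : {perm T}) (x y z : T) (A : {set T}).

Definition stab A := forall z, (s z \in A) = (z \in A).
Definition GA A : {set {perm T}} := ('C[s] :&: 'C(~: A | 'P))%g.

Lemma GAP A t : reflect ((forall z, t (s z) = s (t z)) /\ (forall z, z \notin A -> t z = z))
  (t \in GA A).
Proof.
rewrite /GA in_setI; apply: (iffP andP).
  case=> /cent1P hc /astabP hf; split.
    by move=> z; rewrite -!permM hc.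
  by move=> z hz; have := hf z; rewrite inE => /(_ hz).
case=> hc hf; split.
  by apply/cent1P; apply/permP => z; rewrite !permM hc.
by apply/astabP => z; rewrite inE => /hf.
Qed.

Lemma iter_comm t (h : forall z, t (s z) = s (t z)) i x : iter i s (t x) = t (iter i s x).
Proof. by elim: i => //= i ->; rewrite h. Qed.

Lemma porbit_comm t (h : forall z, t (s z) = s (t z)) x :
  porbit s (t x) = [set t y | y in porbit s x].
Proof.
apply/setP => z; apply/porbitP/imsetP.
  by case=> i ->; exists ((s ^+ i)%g x); rewrite ?mem_porbit // !permX iter_comm.
by case=> y /porbitP [i ->] ->; exists i; rewrite !permX iter_comm.
Qed.

Lemma clen_comm t (h : forall z, t (s z) = s (t z)) x : clen s (t x) = clen s x.
Proof. by rewrite /clen porbit_comm // card_imset //; apply: perm_inj. Qed.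

Lemma mem_porbit_s x z : (s z \in porbit s x) = (z \in porbit s x).
Proof. by rewrite porbit_sym porbit_s porbit_sym. Qed.

Lemma porbit_sub A x : stab A -> x \in A -> porbit s x \subset A.
Proof.
move=> sA xA; apply/subsetP => z /porbitP [i ->]; rewrite permX.
by elim: i => //= i IH; rewrite sA.
Qed.

Section Swap.
Variables (A : {set T}) (x y : T).
Hypotheses (sA : stab A) (xA : x \in A) (yA : y \in A) (kxy : clen s x = clen s y).

Definition sw z := if z \in porbit s x then iter (off s x z) s y
  else if z \in porbit s y then iter (off s y z) s x else z.

Lemma sw1 z : z \in porbit s x -> sw z \in porbit s y.
Proof. by rewrite /sw => ->; apply: iter_porbitE. Qed.
Lemma sw2 z : z \notin porbit s x -> z \in porbit s y -> sw z \in porbit s x.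
Proof. by rewrite /sw => /negbTE -> ->; apply: iter_porbitE. Qed.
Lemma sw3 z : z \notin porbit s x -> z \notin porbit s y -> sw z = z.
Proof. by rewrite /sw => /negbTE -> /negbTE ->. Qed.

Lemma sw_inj : injective sw.
Proof.
have H1 : forall a b, a \in porbit s x -> b \in porbit s x -> sw a = sw b -> a = b.
  move=> a b ha hb; rewrite /sw ha hb => e.
  rewrite -(iter_off ha) -(iter_off hb); congr iter.
  by apply: (iter_inj_lt (u := s) (x := y)); rewrite // -kxy off_lt.
have H2 : forall a b, a \notin porbit s x -> b \notin porbit s x ->
    a \in porbit s y -> b \in porbit s y -> sw a = sw b -> a = b.
  move=> a b ha hb ha' hb'; rewrite /sw (negbTE ha) (negbTE hb) ha' hb' => e.
  rewrite -(iter_off ha') -(iter_off hb'); congr iter.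
  by apply: (iter_inj_lt (u := s) (x := x)); rewrite // kxy off_lt.
have H3 : forall a b, a \in porbit s x -> b \notin porbit s x -> sw a <> sw b.
  move=> a b ha hb e; have := sw1 ha; rewrite e.
  case: (boolP (b \in porbit s y)) => hb'.
    move=> h1; have h2 := sw2 hb hb'.
    by move: hb; rewrite (porbit_disj h2 h1) hb'.
  by rewrite sw3 // (negbTE hb').
have H4 : forall a b, a \notin porbit s x -> a \in porbit s y ->
    b \notin porbit s x -> b \notin porbit s y -> sw a <> sw b.
  move=> a b ha ha' hb hb' e; have := sw2 ha ha'; rewrite e sw3 //.
  by rewrite (negbTE hb).
move=> a b e.
case: (boolP (a \in porbit s x)) => ha; case: (boolP (b \in porbit s x)) => hb.
- exact: H1.
- by case: (H3 _ _ ha hb e).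
- by case: (H3 _ _ hb ha (esym e)).
case: (boolP (a \in porbit s y)) => ha'; case: (boolP (b \in porbit s y)) => hb'.
- exact: H2.
- by case: (H4 _ _ ha ha' hb hb' e).
- by case: (H4 _ _ hb hb' ha ha' (esym e)).
by rewrite -(sw3 ha ha') -(sw3 hb hb').
Qed.

Lemma sw_comm z : sw (s z) = s (sw z).
Proof.
rewrite /sw !mem_porbit_s.
case: (boolP (z \in porbit s x)) => hx.
  by rewrite off_succ // kxy -/(iter (off s x z).+1 s y) iter_mod.
case: (boolP (z \in porbit s y)) => hy //.
by rewrite off_succ // -kxy -/(iter (off s y z).+1 s x) iter_mod.
Qed.

Lemma sw_out z : z \notin A -> sw z = z.
Proof.
move=> hz; apply: sw3; apply: contra hz; apply/subsetP; exact: porbit_sub.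
Qed.

Lemma sw_x : sw x = y.
Proof.
have h0 : off s x x = 0 := off_iter (u := s) (x := x) (i := 0) (clen_gt0 s x).
by rewrite /sw porbit_id h0.
Qed.

End Swap.

Lemma orbit_GA A x : stab A -> x \in A ->
  orbit 'P (GA A) x = [set y in A | clen s y == clen s x].
Proof.
move=> sA xA; apply/setP => y; rewrite inE; apply/imsetP/andP.
  case=> t /GAP [hc hf] ->; rewrite /= apermE clen_comm // eqxx; split => //.
  apply: contraT => ht; have := hf _ ht; move/perm_inj => e.
  by move: ht; rewrite e xA.
case=> yA /eqP kyx; exists (perm (sw_inj (esym kyx))).
  apply/GAP; split => z; rewrite !permE.
    exact: sw_comm.
  by move=> hz; apply: (sw_out sA xA yA).
by rewrite /= apermE permE sw_x.
Qed.

Lemma stab_GA A x : stab A -> x \in A ->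
  ('C_(GA A)[x | 'P])%g = GA (A :\: porbit s x).
Proof.
move=> sA xA; apply/setP => t; rewrite in_setI; apply/andP/GAP.
  case=> /GAP [hc hf] /astab1P /= htx; split => // z.
  rewrite in_setD negb_and negbK; case/orP => hz; last exact: hf.
  by rewrite apermE in htx; case/porbitP: hz => i ->; rewrite permX -iter_comm // htx.
case=> hc hf; split.
  apply/GAP; split => // z hz; apply: hf; rewrite in_setD negb_and hz orbT //.
apply/astab1P => /=; apply: hf; by rewrite in_setD porbit_id.
Qed.

Definition cycA A k : {set {set T}} := [set c in porbits s | (c \subset A) && (#|c| == k)].

Lemma card_clen A k : stab A -> #|[set y in A | clen s y == k]| = #|cycA A k| * k.
Proof.
move=> sA; rewrite -sum_nat_const.
have -> : [set y in A | clen s y == k] = cover (cycA A k).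
  apply/setP => y; rewrite inE; apply/andP/bigcupP.
    case=> yA /eqP hk; exists (porbit s y); last exact: porbit_id.
    by rewrite inE porbit_sub // -/(clen s y) hk eqxx !andbT; apply/porbitsP; exists y.
  case=> c; rewrite inE => /andP [/porbitsP [z ->] /andP [hs /eqP hk]] hy.
  split; first by apply: (subsetP hs).
  by rewrite /clen (porbit_eq hy) hk.
have /trivIsetP h : trivIset (cycA A k).
  apply/trivIsetP => c1 c2; rewrite !inE => /andP [/porbitsP [z1 ->] _] /andP [/porbitsP [z2 ->] _] hne.
  rewrite disjoints_subset; apply/subsetP => w h1; rewrite inE; apply/negP => h2.
  by move: hne; rewrite (porbit_disj h1 h2) eqxx.
have := h; move/trivIsetP; rewrite /trivIset => /eqP <-.
by apply: eq_bigr => c; rewrite inE => /andP [_ /andP [_ /eqP]].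
Qed.

Lemma cycA_step A x j : stab A -> x \in A ->
  #|cycA A j| = (#|porbit s x| == j) + #|cycA (A :\: porbit s x) j|.
Proof.
move=> sA xA; rewrite (cardsD1 (porbit s x)); congr addn.
  rewrite inE porbit_sub //.
  have -> : porbit s x \in porbits s by apply/porbitsP; exists x.
  by [].


apply: eq_card => c; rewrite !inE.
case: (boolP (c \in porbits s)) => [/porbitsP [z ->]| _]; last by rewrite /= andbF.
rewrite /=; case: (#|porbit s z| == j); rewrite ?andbF //= !andbT.
apply/andP/idP.
  case=> hne hs; apply/subsetP => w hw; rewrite in_setD (subsetP hs) // andbT.
  by apply/negP => hw'; move: hne; rewrite (porbit_disj hw hw') eqxx.
move=> hs; split.
  apply/negP => /eqP e; have := subsetP hs z (porbit_id s z).
  by rewrite in_setD -e porbit_id.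
by apply: (subset_trans hs); apply: subsetDl.
Qed.

Definition ZA A := \prod_(i < #|T|) (i.+1 ^ #|cycA A i.+1| * (#|cycA A i.+1|)`!).

Lemma stab_D A x : stab A -> stab (A :\: porbit s x).
Proof. by move=> sA z; rewrite !in_setD sA mem_porbit_s. Qed.

Lemma GA_card_rec m A : #|A| <= m -> stab A -> #|GA A| = ZA A.
Proof.
elim: m A => [|m IH] A hA sA.
  have A0 : A = set0 by apply/eqP; rewrite -cards_eq0 -leqn0.
  have -> : GA A = [set 1%g].
    apply/setP => t; rewrite in_set1; apply/GAP/eqP.
      by case=> _ hf; apply/permP => z; rewrite perm1 hf // A0 inE.
    by move=> ->; split => z *; rewrite !perm1.
  rewrite cards1 /ZA big1 // => i _.
  have -> : #|cycA A i.+1| = 0.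
    apply/eqP; rewrite cards_eq0; apply/eqP/setP => c; rewrite !inE.
    case: (boolP (c \in porbits s)) => //= /porbitsP [z ->].
    by rewrite A0 subset0 -cards_eq0 (negbTE (card_porbit_neq0 _ _)).
  by rewrite expn0 fact0.
case: (set_0Vmem A) => [A0 | [x xA]].
  by apply: IH => //; rewrite A0 cards0.
have sA' := stab_D x sA.
have hA' : #|A :\: porbit s x| <= m.
  have : #|A :\: porbit s x| < #|A|.
    apply: proper_card; apply/properP; split; first exact: subsetDl.
    by exists x => //; rewrite in_setD porbit_id.
  by move=> h; rewrite -ltnS (leq_trans h hA).
have e0 := card_orbit_stab 'P (GA A)%G x.
have : #|orbit 'P (GA A) x| * #|('C_(GA A)[x | 'P])%g| = #|GA A| := e0.
rewrite stab_GA // IH // orbit_GA // card_clen // => <-.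
set k := clen s x.
have k0 : 0 < k := clen_gt0 s x.
have kN : k.-1 < #|T| by rewrite prednK // /k /clen max_card.
rewrite /ZA (bigD1 (Ordinal kN)) //= [in RHS](bigD1 (Ordinal kN)) //= prednK //.
rewrite (cycA_step _ sA xA) -/(clen s x) -/k eqxx add1n.
have -> : \prod_(i < #|T| | i != Ordinal kN) (i.+1 ^ #|cycA A i.+1| * (#|cycA A i.+1|)`!)
  = \prod_(i < #|T| | i != Ordinal kN)
      (i.+1 ^ #|cycA (A :\: porbit s x) i.+1| * (#|cycA (A :\: porbit s x) i.+1|)`!).
  apply: eq_bigr => i hi; rewrite (cycA_step _ sA xA) -/(clen s x) -/k.
  have -> : (k == i.+1) = false.
    apply/negbTE; apply: contra hi => /eqP e; apply/eqP/val_inj => /=.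
    by rewrite e.
  by [].
set P := \prod_(_ < _ | _) _; set c := #|cycA _ k|.
rewrite expnS factS.
move: (k ^ c) (c`!) P => a b p; nia.
Qed.

End Cent.

Section Ctype.
Variable n : nat.
Implicit Types (s t g : {perm 'I_n}).

Lemma cyc_le s k : #|cyc s k| <= n.
Proof.
apply: (leq_trans (subset_leq_card (_ : cyc s k \subset porbits s))).
  by apply/subsetP => c; rewrite inE => /andP [].
by rewrite (leq_trans (leq_imset_card _ _)) // card_ord.
Qed.

Lemma ctypeE s (i : 'I_n) : ctype s i = #|cyc s i.+1| :> nat.
Proof. by rewrite /ctype ffunE inordK // ltnS cyc_le. Qed.

Lemma clen_le s x : clen s x <= n.
Proof. by rewrite /clen -[X in _ <= X](card_ord n) max_card. Qed.

Lemma cyc_out s k : (k == 0) || (n < k) -> #|cyc s k| = 0.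
Proof.
move=> hk; apply/eqP; rewrite cards_eq0; apply/eqP/setP => c; rewrite !inE.
case: (boolP (c \in porbits s)) => //= /porbitsP [z ->]; apply/negbTE.
have h1 := clen_gt0 s z; have h2 := clen_le s z; rewrite /clen in h1 h2.
apply/eqP => e; move: hk; rewrite -e; case/orP => [/eqP h|h]; first by rewrite h in h1.
by move: h; rewrite ltnNge h2.
Qed.

Lemma ctype_conj s g : ctype (s ^ g)%g = ctype s.
Proof. by apply/ffunP => i; rewrite !ffunE; congr inord; exact: cyc_conj. Qed.

Lemma conj_ctype s t : ctype t = ctype s -> exists g, t = (s ^ g)%g.
Proof.
move=> e; apply: conj_of_cyc => k.
case: (boolP ((k == 0) || (n < k))) => hk; first by rewrite !cyc_out.
have kn : k.-1 < n by move: hk; rewrite negb_or -leqNgt => /andP [/eqP ? ?]; lia.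
have k0 : 0 < k by move: hk; rewrite negb_or lt0n => /andP [].
have := congr1 (fun f : partn_t n => nat_of_ord (f (Ordinal kn))) e.
by rewrite /= !ctypeE /= prednK.
Qed.

Lemma cycA_T s k : cycA s setT k = cyc s k.
Proof. by apply/setP => c; rewrite !inE subsetT. Qed.

Lemma card_cent s : #|('C[s])%g| = zee (ctype s).
Proof.
have -> : ('C[s])%g = GA s setT.
  apply/setP => t; apply/cent1P/GAP.
    by move=> hc; split => z; [rewrite -!permM hc | rewrite inE].
  by case=> hc _; apply/permP => z; rewrite !permM hc.
rewrite (@GA_card_rec _ _ #|[set: 'I_n]|) //; last by move=> z; rewrite !inE.
have h : forall m (F : nat -> nat), m = n -> \prod_(i < m) F i = \prod_(i < n) F i.
  by move=> m F ->.
rewrite /ZA (h _ (fun i => i.+1 ^ #|cycA s setT i.+1| * (#|cycA s setT i.+1|)`!)) ?card_ord //.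
by apply: eq_bigr => i _; rewrite ctypeE cycA_T.
Qed.

Lemma card_type s : #|[set t | ctype t == ctype s]| * zee (ctype s) = n`!.
Proof.
have -> : [set t | ctype t == ctype s] = (s ^: [set: {perm 'I_n}])%g.
  apply/setP => t; rewrite inE; apply/eqP/imsetP.
    by case/conj_ctype => g ->; exists g.
  by case=> g _ ->; exact: ctype_conj.
rewrite -(index_cent1 [set: {perm 'I_n}]%G) -card_cent mulnC.
have := Lagrange (subsetT ('C_[set: {perm 'I_n}][s])%g).
move=> e; rewrite -card_Sn -cardsT -e; congr (_ * _); by rewrite /= setTI.
Qed.

Lemma is_partn_ctype s : is_partn (ctype s).
Proof.
rewrite /is_partn; apply/eqP.
have lt y : (clen s y).-1 < n by rewrite prednK ?clen_gt0 // clen_le.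
rewrite -[RHS](card_ord n); symmetry; rewrite -sum1_card.
rewrite (partition_big (fun y => Ordinal (lt y)) xpredT) //=.
apply: eq_bigr => i _.
rewrite mulnC ctypeE -cycA_T -card_clen; last by move=> z; rewrite !inE.
rewrite sum1_card; apply: eq_card => y; rewrite !inE.
apply/eqP/eqP => [e|e]; first by rewrite -e /= prednK // clen_gt0.
by rewrite /= e.
Qed.

End Ctype.

Section Trees.
Variable n : nat.
Implicit Types (s t : {perm 'I_n}) (p q : {perm 'I_n.-2}) (G H : graph n) (C : {set graph n}).

Lemma vmapM s t p q v : vmap (s * t)%g (p * q)%g v = vmap t q (vmap s p v).
Proof. by case: v => i /=; rewrite permM. Qed.

Lemma vmap1 v : vmap (1%g : {perm 'I_n}) (1%g : {perm 'I_n.-2}) v = v.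
Proof. by case: v => i /=; rewrite perm1. Qed.

Lemma vmapK s p : cancel (vmap s p) (vmap s^-1 p^-1).
Proof. by case => i /=; rewrite permK. Qed.

Lemma vmapKV s p : cancel (vmap s^-1 p^-1) (vmap s p).
Proof. by case => i /=; rewrite permKV. Qed.

Lemma vmap_inj s p : injective (vmap s p).
Proof. exact: can_inj (vmapK s p). Qed.

Lemma vmap_comm s p v : vmap s 1 (vmap 1 p v) = vmap 1 p (vmap s 1 v).
Proof. by case: v => i /=; rewrite !perm1. Qed.

Lemma gmap_comp (f g : V n -> V n) G : gmap f (gmap g G) = gmap (f \o g) G.
Proof. by rewrite /gmap -imset_comp. Qed.

Lemma gmap_ext (f g : V n -> V n) G : f =1 g -> gmap f G = gmap g G.
Proof. by move=> e; apply: eq_imset => x; rewrite !e. Qed.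

Lemma gmap_id G : gmap id G = G.
Proof.
rewrite /gmap (eq_imset (g := id)) ?imset_id //.
by case.
Qed.

Lemma pair_inj (f : V n -> V n) : injective f -> injective (fun e : V n * V n => (f e.1, f e.2)).
Proof. by move=> fi [a b] [c d] [/fi -> /fi ->]. Qed.

Lemma mem_gmap (f : V n -> V n) G a b : injective f ->
  ((f a, f b) \in gmap f G) = ((a, b) \in G).
Proof.
move=> fi; exact: (mem_imset (f := fun e : V n * V n => (f e.1, f e.2)) G (a, b) (pair_inj fi)).
Qed.

Lemma deg_gmap s p G x : deg (gmap (vmap s p) G) (vmap s p x) = deg G x.
Proof.
rewrite /deg -[RHS](card_imset _ (@vmap_inj s p)); apply: eq_card => y.
rewrite inE; apply/idP/imsetP.
  rewrite -{1}(vmapKV s p y) mem_gmap //; last exact: vmap_inj.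
  by move=> h; exists (vmap s^-1 p^-1 y); rewrite ?inE ?vmapKV.
by case=> z; rewrite inE => hz ->; rewrite mem_gmap //; apply: vmap_inj.
Qed.

Lemma connect_gmap s p G a b :
  connect (fun x y => (x, y) \in G) a b ->
  connect (fun x y => (x, y) \in gmap (vmap s p) G) (vmap s p a) (vmap s p b).
Proof.
case/connectP => P hP ->; apply/connectP; exists (map (vmap s p) P).
  by apply: homo_path hP => x y h; rewrite mem_gmap //; apply: vmap_inj.
by rewrite last_map.
Qed.

Lemma ubtree_gmap s p G : is_ubtree G -> is_ubtree (gmap (vmap s p) G).
Proof.
have fi := @vmap_inj s p.
case/and5P => h1 h2 h3 h4 /andP [h5 h6]; apply/and5P; split; last apply/andP; try split.
- apply/forallP => x; rewrite -(vmapKV s p x) mem_gmap //.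
  exact: (forallP h1).
- apply/forallP => x; apply/forallP => y.
  rewrite -(vmapKV s p x) -(vmapKV s p y) !mem_gmap //.
  exact: (forallP (forallP h2 _)).
- apply/forallP => x; apply/forallP => y.
  rewrite -(vmapKV s p x) -(vmapKV s p y); apply: connect_gmap.
  exact: (forallP (forallP h3 _)).
- by rewrite /gmap card_imset //; apply: pair_inj.
- apply/forallP => i; have -> : inl i = vmap s p (inl (s^-1%g i)) by rewrite /= permKV.
  by rewrite deg_gmap; exact: (forallP h5).
- apply/forallP => j; have -> : inr j = vmap s p (inr (p^-1%g j)) by rewrite /= permKV.
  by rewrite deg_gmap; exact: (forallP h6).
Qed.

Lemma isoclass_act s G : G \in UBT n ->
  actT s (isoclass G) = isoclass (gmap (vmap s 1) G).
Proof.
rewrite inE => hG; apply/setP => K; apply/imsetP/idP.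
  case=> H; rewrite inE => /andP [hH /existsP [p /eqP <-]] ->.
  rewrite inE; apply/andP; split.
    by rewrite /UBT inE; do 2 apply: ubtree_gmap.
  apply/existsP; exists p; rewrite !gmap_comp; apply/eqP; apply: gmap_ext => v /=.
  by rewrite vmap_comm.
rewrite inE => /andP [hK /existsP [p /eqP <-]].
exists (gmap (vmap 1 p) G).
  by rewrite inE /UBT inE ubtree_gmap //=; apply/existsP; exists p.
by rewrite !gmap_comp; apply: gmap_ext => v /=; rewrite vmap_comm.
Qed.

Lemma actT1 C : actT 1 C = C.
Proof.
rewrite /actT (eq_imset (g := id)) ?imset_id // => G.
by rewrite (gmap_ext _ vmap1) gmap_id.
Qed.

Lemma actTM s t C : actT (s * t)%g C = actT t (actT s C).
Proof.
rewrite /actT -imset_comp; apply: eq_imset => G /=.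
rewrite gmap_comp; apply: gmap_ext => v /=.
by case: v => i /=; rewrite ?permM ?perm1.
Qed.

Lemma actT_Trees s C : (actT s C \in Trees n) = (C \in Trees n).
Proof.
have h : forall s C, C \in Trees n -> actT s C \in Trees n.
  move=> s' C' /imsetP [G hG ->]; rewrite isoclass_act //.
  apply/imsetP; exists (gmap (vmap s' 1) G) => //.
  by rewrite /UBT inE ubtree_gmap //; move: hG; rewrite /UBT inE.
apply/idP/idP; last exact: h.
by move=> /(h s^-1%g); rewrite -actTM mulgV actT1.
Qed.

Lemma actT_inj s : injective (actT s).
Proof.
by apply: (can_inj (g := actT s^-1%g)) => C; rewrite -actTM mulgV actT1.
Qed.

End Trees.

Section Unord.
Variable X : finType.
Variable phi : X -> X.
Hypothesis phi_inj : injective phi.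
Variable S : {set X}.
Hypothesis phiS : forall x, (phi x \in S) = (x \in S).

Definition UT : {set {set X}} := [set [set x.1; x.2] | x in setX S S].
Definition FixU : {set {set X}} := [set P in UT | [set phi y | y in P] == P].
Definition F1 := [set x in S | phi x == x].
Definition G2 := [set x in S | phi (phi x) == x].

Lemma pair_fix a b : ([set phi a; phi b] == [set a; b]) =
  ((phi a == a) && (phi b == b)) || ((phi a == b) && (phi b == a)).
Proof.
apply/eqP/idP.
  move=> h; have ha : phi a \in [set a; b] by rewrite -h set21.
  have hb : phi b \in [set a; b] by rewrite -h set22.
  case/set2P: ha => ea; case/set2P: hb => eb.
  - have e : a = b by apply: phi_inj; rewrite ea eb.
    by subst b; rewrite ea eqxx.
  - by rewrite ea eb !eqxx.
  - by rewrite ea eb !eqxx orbT.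
  - have e : a = b by apply: phi_inj; rewrite ea eb.
    by rewrite ea eb -e eqxx.
case/orP => /andP [/eqP -> /eqP ->] //.
by rewrite setUC.
Qed.

Definition Q := [set x in setX S S | [set phi x.1; phi x.2] == [set x.1; x.2]].
Definition r (x : X) : nat := enum_rank x.

Lemma card_Q : #|Q| + #|F1| = #|F1| ^ 2 + #|G2|.
Proof.
set A := setX F1 F1.
set B := [set (a, phi a) | a in G2].
have eQ : Q = A :|: B.
  apply/setP => [[a b]]; rewrite !inE /= pair_fix.
  apply/idP/idP.
    case/andP => /andP [aS bS] /orP [/andP [ha hb] | /andP [ha hb]].
      by rewrite aS bS ha hb.
    apply/orP; right; apply/imsetP; exists a; last by rewrite (eqP ha).
    by rewrite inE aS (eqP ha) hb.
  case/orP => [/andP [/andP [aS ha] /andP [bS hb]] | /imsetP [c]].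
    by rewrite aS bS ha hb.
  rewrite inE => /andP [cS hc] [-> ->]; rewrite cS phiS cS /= hc eqxx orbT //.
have eI : A :&: B = [set (a, a) | a in F1].
  apply/setP => [[a b]]; rewrite !inE /=; apply/andP/imsetP.
    case=> /andP [/andP [aS ha] /andP [bS hb]] /imsetP [c _ [ec ed]].
    exists a; first by rewrite inE aS ha.
    by rewrite ed -ec (eqP ha).
  case=> c; rewrite inE => /andP [cS hc] [-> ->]; split.
    by rewrite cS hc.
  apply/imsetP; exists c; last by rewrite (eqP hc).
  by rewrite inE cS /= (eqP hc) (eqP hc) eqxx.
have hI : #|[set (a, a) | a in F1]| = #|F1| by rewrite card_imset //; move=> x y [].
have hB : #|B| = #|G2| by rewrite card_imset //; move=> x y [].
have := cardsUI A B; rewrite -eQ eI hI hB /A cardsX => ->.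
by [].
Qed.

Lemma card_FixU : 2 * #|FixU| = #|F1| ^ 2 + #|G2|.
Proof.
set Qle := [set x in Q | r x.1 <= r x.2].
set Q1 := [set x in Q | r x.1 < r x.2].
set Qe := [set x in Q | x.1 == x.2].
have hFix : #|FixU| = #|Qle|.
  have -> : FixU = [set [set x.1; x.2] | x in Qle].
    apply/setP => P; rewrite inE; apply/andP/imsetP.
      case=> /imsetP [[a b] hab ->] /eqP hfix.
      have hq : (a, b) \in Q by rewrite inE hab /=; apply/eqP; rewrite -hfix imsetU1 imset_set1.
      case: (leqP (r a) (r b)) => hr.
        by exists (a, b); rewrite // inE hq hr.
      exists (b, a); last by rewrite /= setUC.
      rewrite inE /= (ltnW hr) andbT; move: hq; rewrite !inE /=.
      by rewrite [_ && (b \in S)]andbC [[set phi b; phi a]]setUC [[set b; a]]setUC.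
    case=> [[a b]]; rewrite !inE /= => /andP [/andP [hab hfix] _] ->; split.
      by apply/imsetP; exists (a, b); rewrite // in_setX.
    by rewrite imsetU1 imset_set1.
  apply: card_in_imset => [[a b] [c d]]; rewrite !inE /= => /andP [_ h1] /andP [_ h2] e.
  have ha : a \in [set c; d] by rewrite -e set21.
  have hb : b \in [set c; d] by rewrite -e set22.
  have hc : c \in [set a; b] by rewrite e set21.
  have hd : d \in [set a; b] by rewrite e set22.
  case/set2P: ha => ea; case/set2P: hb => eb; subst.
  - by case/set2P: hd => ->.
  - by [].
  - have : r c = r d by apply/eqP; rewrite eqn_leq h1 h2.
    by move/val_inj/enum_rank_inj => ->.
  - by case/set2P: hc => ->.
have hsw : #|[set x in Q | r x.2 < r x.1]| = #|Q1|.
  have swi : injective (fun x : X * X => (x.2, x.1)) by move=> [a b] [c d] [-> ->].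
  rewrite -(card_imset _ swi).
  apply: eq_card => [[a b]]; rewrite !inE /=; apply/imsetP/idP.
    case=> [[c d]]; rewrite !inE /= => /andP [/andP [/andP [cS dS] h] hr] [-> ->].
    by rewrite dS cS hr andbT /= [[set phi d; phi c]]setUC (eqP h) setUC eqxx.
  move=> /andP [/andP [/andP [aS bS] h] hr]; exists (b, a) => //.
  by rewrite !inE /= bS aS hr andbT /= [[set phi b; phi a]]setUC (eqP h) setUC eqxx.
have hQ : #|Q| = #|Qle| + #|[set x in Q | r x.2 < r x.1]|.
  rewrite -(cardsID [set x | r x.1 <= r x.2] Q); congr addn; apply: eq_card => x; rewrite !inE.
    by rewrite andbC.
  by rewrite -ltnNge andbC.
have hle : #|Qle| = #|Q1| + #|Qe|.
  rewrite -(cardsID [set x | x.1 != x.2] Qle); congr addn; apply: eq_card => [[a b]]; rewrite !inE /=.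
    have req : (r a == r b) = (a == b) by apply/eqP/eqP => [/val_inj/enum_rank_inj|->].
    rewrite ltn_neqAle req.
    by case: (a == b); case: (r a <= r b); rewrite /= ?andbT ?andbF.
  case: (boolP (a == b)) => [/eqP <-|hab]; first by rewrite leqnn /= !andbT.
  by rewrite /= andbF.
have hQe : #|Qe| = #|F1|.
  have di : injective (fun a : X => (a, a)) by move=> x y [].
  rewrite -(card_imset _ di).
    apply: eq_card => [[a b]]; rewrite !inE /=; apply/andP/imsetP.
      case=> /andP [/andP [aS _] h] /eqP e; subst b; exists a => //.
      rewrite inE aS /=; move: h; rewrite pair_fix; case/orP; case/andP => //.
    case=> c; rewrite inE => /andP [cS hc] [-> ->]; rewrite cS (eqP hc) eqxx.
    by [].
have hc := card_Q; rewrite -/Q in hc.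
lia.
Qed.

End Unord.

Section Burn.
Variable n : nat.
Implicit Types (s t g a : {perm 'I_n}) (C D : {set graph n}).

Definition actTf C s := actT s C.
Lemma actTf1 : actTf^~ 1%g =1 id. Proof. by move=> C; exact: actT1. Qed.
Lemma actTfM C : act_morph actTf C. Proof. by move=> a b; exact: actTM. Qed.
Definition actTA := TotalAction actTf1 actTfM.

Definition actPf (x : {set graph n} * {set graph n}) s := (actT s x.1, actT s x.2).
Lemma actPf1 : actPf^~ 1%g =1 id. Proof. by case=> C D; rewrite /actPf /= !actT1. Qed.
Lemma actPfM x : act_morph actPf x. Proof. by move=> a b; rewrite /actPf /= !actTM. Qed.
Definition actPA := TotalAction actPf1 actPfM.

Lemma actTK g C : actT g^-1%g (actT g C) = C.
Proof. by rewrite -actTM mulgV actT1. Qed.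
Lemma actTKV g C : actT g (actT g^-1%g C) = C.
Proof. by rewrite -actTM mulVg actT1. Qed.

Lemma actT_conj s g C : actT (s ^ g)%g C = actT g (actT s (actT g^-1%g C)).
Proof. by rewrite conjgE !actTM. Qed.

Lemma fixU_conj s g : fixU (s ^ g)%g = fixU s.
Proof.
rewrite /fixU -[RHS](card_imset _ (@actT_inj n g)); apply: eq_card => D.
rewrite inE; apply/andP/imsetP.
  case=> hD /eqP e; exists (actT g^-1%g D); last by rewrite actTKV.
  rewrite inE actT_Trees hD /=; apply/eqP; apply: (@actT_inj n g).
  by rewrite actTKV -{2}e actT_conj.
case=> C; rewrite inE => /andP [hC /eqP e] ->; split; first by rewrite actT_Trees.
by rewrite actT_conj actTK e.
Qed.

Lemma fixU_ctype s t : ctype s = ctype t -> fixU s = fixU t.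
Proof. by move=> e; case: (conj_ctype (esym e)) => g ->; rewrite fixU_conj. Qed.

Lemma fixU2_ctype s t : ctype s = ctype t -> fixU (s ^+ 2)%g = fixU (t ^+ 2)%g.
Proof. by move=> e; case: (conj_ctype (esym e)) => g ->; rewrite -conjXg fixU_conj. Qed.

Lemma tangle_count : num_tanglegrams n * n`! = \sum_(s : {perm 'I_n}) fixU s ^ 2.
Proof.
have acts : [acts [set: {perm 'I_n}], on Tangle n | actPA].
  apply/actsP => a _ [C D]; rewrite /Tangle /= !in_setX /=.
  by rewrite /actPf /= !actT_Trees.
have FC := Frobenius_Cauchy acts.
rewrite cardsT card_Sn in FC.
have -> : num_tanglegrams n = #|[set orbit actPA [set: {perm 'I_n}] x | x in Tangle n]|.
  have e : forall x : {set graph n} * {set graph n}, Defs.orbT x = orbit actPA [set: {perm 'I_n}] x.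
    move=> x; apply/setP => y; apply/imsetP/imsetP; case=> s _ ->; by exists s.
  by rewrite /num_tanglegrams (eq_imset _ e).
rewrite -FC; apply: eq_big => [a|a _]; first by rewrite inE.
rewrite -[fixU a ^ 2]/(fixU a * fixU a) /fixU -cardsX; apply: eq_card => [[C D]].
rewrite in_setI.
have -> : ((C, D) \in 'Fix_actPA[a]%g) = (actT a C == C) && (actT a D == D).
  apply/afix1P/andP => /= [[e1 e2] | [/eqP e1 /eqP e2]].
    by rewrite e1 e2.
  by rewrite /actPf /= e1 e2.
rewrite /Tangle !inE /=.
by case: (C \in Trees n); case: (D \in Trees n); case: (actT a C == C); case: (actT a D == D).
Qed.

Lemma setact2 a (x : {set graph n} * {set graph n}) :
  setact actTA [set x.1; x.2] a = [set actT a x.1; actT a x.2].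
Proof. by rewrite setactE imsetU1 imset_set1. Qed.

Lemma utangle_count : 2 * num_utanglegrams n * n`! = \sum_(s : {perm 'I_n}) (fixU s ^ 2 + fixU (s ^+ 2)%g).
Proof.
have hU : forall a P, P \in UTangle n -> setact actTA P a \in UTangle n.
  move=> a P /imsetP [x hx ->]; rewrite setact2.
  apply/imsetP; exists (actT a x.1, actT a x.2) => //.
  by case: x hx => C D; rewrite /Tangle !in_setX /= !actT_Trees.
have acts : [acts [set: {perm 'I_n}], on UTangle n | actTA^*].
  apply/actsP => a _ P /=; apply/idP/idP; last exact: hU.
  move=> /(hU a^-1%g); rewrite !setactE -imset_comp.
  rewrite (eq_imset (g := id)) ?imset_id // => C /=.
  by rewrite /actTf actTK.
have FC := Frobenius_Cauchy acts.
rewrite cardsT card_Sn in FC.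
have -> : num_utanglegrams n = #|[set orbit actTA^* [set: {perm 'I_n}] x | x in UTangle n]|.
  have e : forall x : {set {set graph n}}, orbU x = orbit actTA^* [set: {perm 'I_n}] x.
    move=> x; apply/setP => y; apply/imsetP/imsetP; case=> s _ ->; by exists s.
  by rewrite /num_utanglegrams (eq_imset _ e).
rewrite -mulnA -FC big_distrr /=; apply: eq_big => [a|a _]; first by rewrite inE.
have -> : 'Fix_(UTangle n | actTA^*)[a]%g = FixU (actT a) (Trees n).
  apply/setP => P; rewrite /FixU in_setI [in RHS]inE; congr andb.
  by apply/afix1P/eqP; rewrite /= setactE.
rewrite card_FixU; last by move=> C; rewrite actT_Trees.
  rewrite /fixU; congr (_ ^ 2 + _); apply: eq_card => C; rewrite !inE.
  by rewrite expgS expg1 actTM.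
exact: actT_inj.
Qed.

End Burn.

Import GRing.Theory Num.Theory.
Local Open Scope ring_scope.

Section Final.
Variable n : nat.

Definition Fl (F : {perm 'I_n} -> nat) (l : partn_t n) : nat :=
  if [pick s : {perm 'I_n} | ctype s == l] is Some s then F s else 0.

Lemma sum_class (F : {perm 'I_n} -> nat)
  (HF : forall s t, ctype s = ctype t -> F s = F t) :
  ((\sum_(s : {perm 'I_n}) F s)%N%:R : rat) =
  (n`!)%:R * \sum_(l : partn_t n | is_partn l) (Fl F l)%:R / (zee l)%:R.
Proof.
rewrite (partition_big (@ctype n) (@is_partn n)); last by move=> s _; exact: is_partn_ctype.
rewrite natr_sum mulr_sumr; apply: eq_bigr => l _.
rewrite /Fl; case: pickP => [s0 /eqP hs0 | hnone]; last first.
  by rewrite big_pred0 // mul0r mulr0.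
have hc := card_type s0; rewrite hs0 in hc.
have -> : (\sum_(s | true && (ctype s == l)) F s = #|[set t | ctype t == l]| * F s0)%N.
  rewrite -sum_nat_const; apply: eq_big => s; first by rewrite inE.
  by move/eqP => e; apply: HF; rewrite e hs0.
have z0 : (zee l)%:R != 0 :> rat.
  rewrite pnatr_eq0; apply/eqP => z; move: hc; rewrite z muln0 => h.
  by have := fact_gt0 n; rewrite -h.
rewrite -hc natrM natrM.
by field.
Qed.

End Final.

Theorem mainTheorem2 (n : nat) (hn : (2 <= n)%N) :
  (num_tanglegrams n)%:R =
    \sum_(l : partn_t n | is_partn l) ((ulam l) ^ 2)%:R / (zee l)%:R :> rat
  /\
  (num_utanglegrams n)%:R =
    1 / 2 * (\sum_(l : partn_t n | is_partn l) ((ulam l) ^ 2)%:R / (zee l)%:R)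
    + 1 / 2 * (\sum_(l : partn_t n | is_partn l) (ulam (lsq l))%:R / (zee l)%:R) :> rat.
Proof.
have nf : (n`!)%:R != 0 :> rat by rewrite pnatr_eq0 -lt0n fact_gt0.
split.
  have h : ((\sum_(s : {perm 'I_n}) fixU s ^ 2)%N%:R : rat) = (n`!)%:R *
     \sum_(l : partn_t n | is_partn l) (Fl (fun s => (fixU s ^ 2)%N) l)%:R / (zee l)%:R
    := sum_class (F := fun s => (fixU s ^ 2)%N) (fun s t e => congr1 (fun x => (x ^ 2)%N) (fixU_ctype e)).
  move: h; rewrite -tangle_count natrM mulrC => /(mulfI nf) ->.
  apply: eq_bigr => l _; congr (_%:R / _); rewrite /Fl /ulam.
  by case: pickP.
have h : ((\sum_(s : {perm 'I_n}) (fixU s ^ 2 + fixU (s ^+ 2)%g))%N%:R : rat) = (n`!)%:R *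
     \sum_(l : partn_t n | is_partn l) (Fl (fun s => (fixU s ^ 2 + fixU (s ^+ 2)%g)%N) l)%:R / (zee l)%:R
  := sum_class (F := fun s => (fixU s ^ 2 + fixU (s ^+ 2)%g)%N)
  (fun s t e => congr2 addn (congr1 (fun x => (x ^ 2)%N) (fixU_ctype e)) (fixU2_ctype e)).
move: h; rewrite -utangle_count natrM mulrC => /(mulfI nf).
have -> : \sum_(l : partn_t n | is_partn l) (Fl (fun s => (fixU s ^ 2 + fixU (s ^+ 2)%g)%N) l)%:R / (zee l)%:R
  = \sum_(l : partn_t n | is_partn l) ((ulam l) ^ 2)%:R / (zee l)%:R
    + \sum_(l : partn_t n | is_partn l) (ulam (lsq l))%:R / (zee l)%:R :> rat.
  rewrite -big_split; apply: eq_bigr => l _ /=; rewrite -mulrDl -natrD; congr (_%:R / _).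
  rewrite /Fl /ulam /lsq; case: pickP => [s0 /eqP hs0 | hnone] /=; last first.
    by case: pickP => [s /eqP hs | _] //; move: (hnone s); rewrite hs eqxx.
  congr addn; case: pickP => [s1 /eqP hs1 | h]; first exact: fixU_ctype.
  by move: (h (s0 ^+ 2)%g); rewrite eqxx.
move=> e; rewrite -mulrDr -e natrM.
by field.
Qed.
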